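(* Let $(u_n)_{n \geq 1}$ be a sequence of unitary matrices such that $u_n \in V(n)$ for all $n \geq 1$. Then $(u_n)_{n\ge1}$ is a virtual rotation in the sense of Neretin if and only if it is a virtual isometry.
   Context: $V(n)$ denotes the set of $n\times n$ unitary matrices which do not have $1$ as an eigenvalue. For $n\ge m\ge1$ and $u\in V(n)$ written in blocks $u=\begin{pmatrix}A&B\\C&D\end{pmatrix}$ of sizes $m\times m$, $m\times(n-m)$, $(n-m)\times m$, $(n-m)\times(n-m)$, $1-D$ is invertible and one sets $\tilde\pi_{n,m}(u) := A + B(1-D)^{-1}C\in V(m)$. A virtual rotation in the sense of Neretin is a sequence $(u_n)_{n\ge1}$ with $u_n\in V(n)$ and $u_m=\tilde\pi_{n,m}(u_n)$ for all $n\ge m\ge1$. Let $(e_k)$ be the canonical basis of $\ell^2$; identify $\mathbb{C}^n$ with the span of $e_1,\dots,e_n$ and $U(n)$ with the unitary operators fixing every $e_k$, $k>n$. For $n\ge m\ge1$ and $u\in U(n)$, $\pi_{n,m}(u)$ is the unique $v\in U(m)$ such that the range of $u-v$ is contained in $(u-\mathrm{Id})(\mathrm{span}\{e_k:k>m\})$ (existence and uniqueness are known). A virtual isometry is a sequence $(u_n)_{n\ge1}$ with $u_n\in U(n)$ and $\pi_{n+1,n}(u_{n+1})=u_n$ for all $n\ge1$. *)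

(* Defs.v *)
From HB Require Import structures.
From mathcomp Require Import all_boot all_order all_algebra.
From mathcomp Require Import complex reals.
Set Implicit Arguments. Unset Strict Implicit. Unset Printing Implicit Defensive.
Import Order.TTheory GRing.Theory Num.Theory.
Local Open Scope ring_scope.
Local Open Scope sesquilinear_scope.

Section Defs.
Variable R : realType.
Local Notation C := R[i].

Definition unitary (n : nat) (u : 'M[C]_n) : Prop := u \is unitarymx.

Definition inV (n : nat) (u : 'M[C]_n) : Prop :=
  unitary u /\ ~~ eigenvalue u 1.

Definition blockify (n m : nat) (H : (m <= n)%N) (u : 'M[C]_n) : 'M[C]_(m + (n - m)) :=
  castmx (esym (subnKC H), esym (subnKC H)) u.

Definition tpi (n m : nat) (H : (m <= n)%N) (u : 'M[C]_n) : 'M[C]_m :=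
  let w := blockify H u in
  ulsubmx w + ursubmx w *m invmx (1%:M - drsubmx w) *m dlsubmx w.

Definition virtual_rotation (u : forall n : nat, 'M[C]_n) : Prop :=
  (forall n, (1 <= n)%N -> inV (u n)) /\
  forall n m (H : (m <= n)%N), (1 <= m)%N -> u m = tpi H (u n).

Definition embed (n m : nat) (H : (m <= n)%N) (v : 'M[C]_m) : 'M[C]_n :=
  castmx (subnKC H, subnKC H) (block_mx v 0 0 1%:M).

(* is_pi H u v  <->  v = pi_{n,m}(u), i.e. v \in U(m) and the range of
   u - v is contained in (u - Id)(span{e_k : k > m}).  Everything lives in
   C^n = span{e_1..e_n} since both u and v fix e_k for k > n; ranges are
   column spaces, expressed as row spaces of transposes. Vectors e_k, k > m,
   (k <= n) are the last n - m columns of the identity. *)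
Definition is_pi (n m : nat) (H : (m <= n)%N) (u : 'M[C]_n) (v : 'M[C]_m) : Prop :=
  unitary v /\
  (((u - embed H v)^T) <=
     (((u - 1%:M) *m castmx (subnKC H, erefl (n - m)%N)
                       (col_mx (0 : 'M[C]_(m, n - m)) 1%:M))^T))%MS.

Definition virtual_isometry (u : forall n : nat, 'M[C]_n) : Prop :=
  (forall n, (1 <= n)%N -> unitary (u n)) /\
  forall n (H : (n <= n.+1)%N), (1 <= n)%N -> is_pi H (u n.+1) (u n).

End Defs.

(* Main.v *)
Require Import Defs.
From HB Require Import structures.
From mathcomp Require Import all_boot all_order all_algebra.
From mathcomp Require Import complex reals.
Set Implicit Arguments. Unset Strict Implicit. Unset Printing Implicit Defensive.
Import Order.TTheory GRing.Theory Num.Theory.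
Local Open Scope ring_scope.
Local Open Scope sesquilinear_scope.

Section Aux.
Variable R : realType.
Local Notation C := R[i].

Definition nrm n (z : 'rV[C]_n) : C := \sum_j z 0 j * (z 0 j)^*.

Lemma nrmE n (z : 'rV[C]_n) : (z *m z^t*) 0 0 = nrm z.
Proof. rewrite !mxE; apply: eq_bigr => j _; rewrite !mxE. done. Qed.

Lemma nrm_unitary n (z : 'rV[C]_n) (u : 'M[C]_n) :
  u \is unitarymx -> nrm (z *m u) = nrm z.
Proof. move=> Hu; rewrite -!nrmE trmx_mul map_mxM mulmxA mulmxtVK //. Qed.

Lemma nrm_eq0 n (z : 'rV[C]_n) : nrm z = 0 -> z = 0.
Proof.
move=> H; apply/rowP => j; rewrite mxE.
have := psumr_eq0P (P := predT) (fun i _ => mul_conjC_ge0 (z 0 i)) H (isT : predT j).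
by move/eqP; rewrite mul_conjC_eq0 => /eqP.
Qed.

Lemma nrm_row_mx m k (a : 'rV[C]_m) (b : 'rV[C]_k) :
  nrm (row_mx a b) = nrm a + nrm b.
Proof. by rewrite /nrm big_split_ord /=; congr (_ + _); apply: eq_bigr => j _;
  rewrite ?row_mxEl ?row_mxEr. Qed.

Lemma nrm0 n : nrm (0 : 'rV[C]_n) = 0.
Proof. by rewrite /nrm big1 // => j _; rewrite mxE mul0r. Qed.

Lemma unit_1D m k (u : 'M[C]_(m + k)) :
  u \is unitarymx -> ~~ eigenvalue u 1 -> (1%:M - drsubmx u) \in unitmx.
Proof.
move=> Hu He; rewrite unitmxE unitfE; apply/negP => /det0P [y y0 Hy].
have yD : y *m drsubmx u = y.
  by move/eqP: Hy; rewrite mulmxBr mulmx1 subr_eq0 => /eqP <-.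
have E : row_mx 0 y *m u = row_mx (y *m dlsubmx u) y.
  by rewrite -{1}(submxK u) mul_row_block !mul0mx !add0r yD.
move: (nrm_unitary (row_mx 0 y) Hu).
rewrite E !nrm_row_mx nrm0 add0r -{2}(add0r (nrm y)) => /addIr.
move=> /nrm_eq0 yC.
move/negP: He; apply; apply/eigenvalueP; exists (row_mx 0 y).
  by rewrite E yC scale1r.
by apply: contra y0 => /eqP; rewrite -row_mx0 => /eq_row_mx [_ ->].
Qed.

Definition Agree m n1 n2 (a : 'rV[C]_n1) (b : 'rV[C]_n2) :=
  forall (i : 'I_n1) (j : 'I_n2), val i = val j -> (val i < m)%N -> a 0 i = b 0 j.
Definition FP m n (u : 'M[C]_n) (z : 'rV[C]_n) :=
  forall i : 'I_n, (m <= i)%N -> (z *m u) 0 i = z 0 i.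
Definition tpiw m k (w : 'M[C]_(m + k)) : 'M[C]_m :=
  ulsubmx w + ursubmx w *m invmx (1%:M - drsubmx w) *m dlsubmx w.

Lemma subE m n (A B : 'M[C]_(m, n)) i j : (A - B) i j = A i j - B i j.
Proof. by rewrite !mxE. Qed.

Lemma row_mx_r m k (a a' : 'rV[C]_m) (b : 'rV[C]_k) (i : 'I_(m+k)) :
  (m <= i)%N -> row_mx a b 0 i = row_mx a' b 0 i.
Proof.
move=> Hi; rewrite !mxE; case: splitP => j /= Hj //.
by move: (ltn_ord j); rewrite -Hj ltnNge Hi.
Qed.

Lemma AgreeL m k (a : 'rV[C]_m) (b : 'rV[C]_k) : Agree m (row_mx a b) a.
Proof.
move=> i j Hij _; have -> : i = lshift k j by apply: val_inj.
by rewrite row_mxEl.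
Qed.

Lemma CharW m k (u : 'M[C]_(m + k)) :
  u \is unitarymx -> ~~ eigenvalue u 1 -> forall x : 'rV[C]_m,
  exists z : 'rV[C]_(m + k),
    [/\ Agree m z x, Agree m (z *m u) (x *m tpiw u) & FP m u z].
Proof.
move=> Hu He x; have Hunit := unit_1D Hu He.
pose y := x *m ursubmx u *m invmx (1%:M - drsubmx u).
have h : y *m (1%:M - drsubmx u) = x *m ursubmx u by rewrite /y mulmxKV.
rewrite mulmxBr mulmx1 in h.
have E : row_mx x y *m u =
   row_mx (x *m tpiw u) y.
  rewrite -{1}(submxK u) mul_row_block; congr row_mx.
    by rewrite /tpiw mulmxDr /y !mulmxA.
  by rewrite -h subrK.
exists (row_mx x y); split; first exact: AgreeL.
  by rewrite E; apply: AgreeL.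
by move=> i Hi; rewrite E; apply: row_mx_r.
Qed.

Lemma Uniq m n (u : 'M[C]_n) (z z' : 'rV[C]_n) :
  u \is unitarymx -> Agree m z z' -> FP m u z -> FP m u z' ->
  Agree m (z *m u) (z' *m u).
Proof.
move=> Hu Hzz Fz Fz'.
pose d := z - z'.
have d0 : forall i : 'I_n, (i < m)%N -> d 0 i = 0.
  by move=> i Hi; rewrite !mxE (Hzz i i) // subrr.
have dF : forall i : 'I_n, (m <= i)%N -> (d *m u) 0 i = d 0 i.
  by move=> i Hi; rewrite mulmxBl subE Fz // Fz' // subE.
have N := nrm_unitary d Hu.
rewrite /nrm (bigID (fun j : 'I_n => (j < m)%N)) /= in N.
rewrite [X in _ = X](bigID (fun j : 'I_n => (j < m)%N)) /= in N.
rewrite [X in _ = X + _]big1 in N; last by move=> j Hj; rewrite d0 // mul0r.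
rewrite add0r [X in _ + X = _](eq_bigr (fun j => d 0 j * (d 0 j)^*)) in N; last first.
  by move=> j; rewrite -leqNgt => Hj; rewrite dF.
rewrite -{2}(add0r (\sum_(i < n | ~~ (i < m)%N) d 0 i * (d 0 i)^*)) in N.
move/addIr: N => N.
move=> i j Hij Hi; have -> : j = i by apply: val_inj.
have := psumr_eq0P (fun i _ => mul_conjC_ge0 ((d *m u) 0 i)) N Hi.
move/eqP; rewrite mul_conjC_eq0 => /eqP.
by rewrite mulmxBl subE => /eqP; rewrite subr_eq0 => /eqP.
Qed.

Lemma CharC m k n (e : (m + k)%N = n) (u : 'M[C]_n) :
  u \is unitarymx -> ~~ eigenvalue u 1 -> forall x : 'rV[C]_m,
  exists z : 'rV[C]_n,
    [/\ Agree m z x, Agree m (z *m u) (x *m tpiw (castmx (esym e, esym e) u)) & FP m u z].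
Proof. by case: n / e u => u; rewrite castmx_id; apply: CharW. Qed.

Lemma Char n m (H : (m <= n)%N) (u : 'M[C]_n) : inV u -> forall x : 'rV[C]_m,
  exists z : 'rV[C]_n,
    [/\ Agree m z x, Agree m (z *m u) (x *m tpi H u) & FP m u z].
Proof. by move=> [Hu He]; apply: (CharC (subnKC H) Hu He). Qed.

Lemma Compose p n m (H1 : (n <= p)%N) (H2 : (m <= n)%N) (H3 : (m <= p)%N)
  (u : 'M[C]_p) : inV u -> inV (tpi H1 u) -> tpi H2 (tpi H1 u) = tpi H3 u.
Proof.
move=> Vu Vv; apply/row_matrixP => i; rewrite !rowE.
suff S : forall x : 'rV[C]_m, x *m tpi H2 (tpi H1 u) = x *m tpi H3 u by rewrite S.
move=> x.
have [z1 [A1 B1 F1]] := Char H2 Vv x.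
have [z2 [A2 B2 F2]] := Char H1 Vu z1.
have [z3 [A3 B3 F3]] := Char H3 Vu x.
have A2x : Agree m z2 x.
  move=> a b Hab Ha; have Han : (a < n)%N by apply: leq_trans Ha H2.
  by rewrite (A2 a (Ordinal Han)) // (A1 (Ordinal Han) b).
have F2m : FP m u z2.
  move=> a Ha; case: (leqP n a) => Hna; first exact: F2.
  by rewrite (B2 a (Ordinal Hna)) // F1 // (A2 a (Ordinal Hna)).
have Hu : u \is unitarymx by case: Vu.
have A23 : Agree m z2 z3.
  move=> a b Hab Ha; have Hb : (b < m)%N by rewrite -Hab.
  by rewrite (A2x a (Ordinal Hb)) // (A3 b (Ordinal Hb)) // -Hab.
have U := Uniq Hu A23 F2m F3.
apply/rowP => j.
have Hj := ltn_ord j.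
rewrite -(B1 (widen_ord H2 j) j) //.
rewrite -(B2 (widen_ord H1 (widen_ord H2 j)) (widen_ord H2 j)) //.
rewrite (U _ (widen_ord H3 j)) //.
  by rewrite (B3 (widen_ord H3 j) j).
exact: leq_trans Hj H2.
Qed.

Lemma IsPiB m k (A : 'M[C]_m) (B : 'M[C]_(m, k)) (Cc : 'M[C]_(k, m)) (D : 'M[C]_k)
  (v : 'M[C]_m) : (1%:M - D) \in unitmx ->
  (((block_mx A B Cc D - block_mx v 0 0 1%:M)^T) <=
     (((block_mx A B Cc D - 1%:M) *m col_mx (0 : 'M[C]_(m, k)) 1%:M)^T))%MS
  <-> v = A + B *m invmx (1%:M - D) *m Cc.
Proof.
move=> HD.
have EX : block_mx A B Cc D - block_mx v 0 0 1%:M = block_mx (A - v) B Cc (D - 1%:M).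
  by rewrite opp_block_mx add_block_mx !oppr0 !addr0.
have EY : (block_mx A B Cc D - 1%:M) *m col_mx (0 : 'M[C]_(m, k)) 1%:M
          = col_mx B (D - 1%:M).
  rewrite [1%:M : 'M_(m + k)]scalar_mx_block opp_block_mx add_block_mx mul_block_col.
  by rewrite !mulmx0 !mulmx1 !oppr0 !addr0 !add0r.
rewrite EX EY; split.
  case/submxP => M /(congr1 trmx); rewrite trmx_mul !trmxK.
  rewrite -[M^T]hsubmxK mul_mx_row block_mxEh => /eq_row_mx [].
  rewrite mul_col_mx => /eq_col_mx [hA hC] _.
  set N1 := lsubmx M^T in hA hC.
  have h1 : (1%:M - D) *m N1 = - Cc by rewrite hC -mulNmx opprB.
  have h2 : N1 = - (invmx (1%:M - D) *m Cc).
    by rewrite -(mulKmx HD N1) h1 mulmxN.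
  have -> : v = A - (A - v) by rewrite opprB addrC subrK.
  by rewrite hA h2 mulmxN opprK mulmxA.
move=> hv; apply/submxP; exists (row_mx (- (invmx (1%:M - D) *m Cc)) 1%:M)^T.
rewrite -trmx_mul; congr trmx.
rewrite mul_col_row !mulmx1; congr block_mx.
  by rewrite hv opprD addNKr mulmxN mulmxA.
by rewrite mulmxN -mulNmx opprB mulmxA mulmxV // mul1mx.
Qed.

Lemma IsPiC m k n (e : (m + k)%N = n) (u : 'M[C]_n) (v : 'M[C]_m) :
  u \is unitarymx -> ~~ eigenvalue u 1 ->
  (((u - castmx (e, e) (block_mx v 0 0 1%:M))^T) <=
     (((u - 1%:M) *m castmx (e, erefl k) (col_mx (0 : 'M[C]_(m, k)) 1%:M))^T))%MS
  <-> v = tpiw (castmx (esym e, esym e) u).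
Proof.
case: n / e u => u Hu He; rewrite !castmx_id /tpiw.
have HD := unit_1D Hu He.
by rewrite -[u in X in (X <= _)%MS]submxK -[u in X in (_ <= X)%MS]submxK; apply: IsPiB.
Qed.

Lemma IsPi n m (H : (m <= n)%N) (u : 'M[C]_n) (v : 'M[C]_m) :
  inV u -> (is_pi H u v <-> unitary v /\ v = tpi H u).
Proof.
move=> [Hu He]; rewrite /is_pi /embed.
have := IsPiC (subnKC H) v Hu He.
by rewrite /tpi /blockify => ->.
Qed.

Lemma TpiId n (H : (n <= n)%N) (u : 'M[C]_n) : inV u -> tpi H u = u.
Proof.
move=> Vu; apply/row_matrixP => i; rewrite !rowE.
suff S : forall x : 'rV[C]_n, x *m tpi H u = x *m u by rewrite S.
move=> x; have [z [A B _]] := Char H Vu x.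
have zx : z = x.
  by apply/rowP => q; exact: (A q q erefl (ltn_ord q)).
subst z; apply/rowP => q; symmetry; exact: (B q q erefl (ltn_ord q)).
Qed.
End Aux.

Theorem proposition2p4 (R : realType) (u : forall n : nat, 'M[R[i]]_n) :
  (forall n : nat, (1 <= n)%N -> inV (u n)) ->
  (virtual_rotation u <-> virtual_isometry u).
Proof.
move=> HV; split.
  case=> _ Hrot; split; first by move=> n hn; case: (HV n hn).
  move=> n H hn; apply/(IsPi H (u n) (HV n.+1 (leq_trans hn (leqnSn n)))).
  by split; [case: (HV n hn) | apply: Hrot].
case=> _ Hiso; split; first exact: HV.
elim=> [|n IH] m H hm; first by move: (leq_trans hm H).
case: (eqVneq m n.+1) => [Em | Nm].
  subst m; by rewrite TpiId; [|apply: HV].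
have Hmn : (m <= n)%N by rewrite -ltnS ltn_neqAle Nm H.
have hn : (1 <= n)%N by apply: leq_trans hm Hmn.
have Vn1 := HV n.+1 (leq_trans hn (leqnSn n)).
have [_ Eun] := proj1 (IsPi (leqnSn n) (u n) Vn1) (Hiso n (leqnSn n) hn).
rewrite (IH m Hmn hm) Eun; apply: Compose => //.
by rewrite -Eun; apply: HV.
Qed.
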